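(* There exists an Orlicz function $\Phi$ on $[0,\infty)$ such that $C_\Phi^\infty\cong\{t\}$ and $E_\Phi^\infty\not\equiv\{t\}$.
   Context: An Orlicz function is an increasing convex function $F$ on $[0,\infty)$ with $F(0)=0$ and $\lim_{t\to\infty}F(t)=\infty$. For an Orlicz function $F$ and $A>0$, let $E_{F,A}^\infty$ be the closure in $C[0,1]$ of the set of functions $\{x\mapsto F(xy)/F(y):\ y>A\}$ (on $[0,1]$); set $E_F^\infty:=\bigcap_{A>0}E_{F,A}^\infty$ and $C_F^\infty:=\overline{\mathrm{conv}\,E_F^\infty}$ (closure in $C[0,1]$ of the convex hull). For a set $S$ of functions on $[0,1]$ and a function $\varphi$ on $[0,1]$, write $S\cong\{\varphi\}$ if for every $H\in S$ there is a constant $C=C(H)>0$ with $C^{-1}\varphi(t)\le H(t)\le C\varphi(t)$ for all $0<t\le 1$; write $S\equiv\{\varphi\}$ if there is a single constant $C>0$ such that this holds for all $H\in S$. *)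

(* Defs.v *)
From Stdlib Require Import Reals.
Open Scope R_scope.

Definition Orlicz (F : R -> R) : Prop :=
  F 0 = 0 /\
  (forall s t, 0 <= s -> s < t -> F s < F t) /\
  (forall s t l, 0 <= s -> 0 <= t -> 0 <= l <= 1 ->
      F (l * s + (1 - l) * t) <= l * F s + (1 - l) * F t) /\
  (forall M, exists T, forall t, T <= t -> M <= F t).

(* Functions on [0,1] are represented by functions R -> R; only their
   values on [0,1] matter. *)
Definition cont01 (g : R -> R) : Prop :=
  forall x, 0 <= x <= 1 -> forall eps, 0 < eps -> exists delta, 0 < delta /\
    forall z, 0 <= z <= 1 -> Rabs (z - x) < delta -> Rabs (g z - g x) < eps.

Definition closure01 (S : (R -> R) -> Prop) (g : R -> R) : Prop :=
  cont01 g /\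
  forall eps, 0 < eps -> exists h, S h /\
    forall x, 0 <= x <= 1 -> Rabs (g x - h x) <= eps.

Definition dilations (F : R -> R) (A : R) (h : R -> R) : Prop :=
  exists y, A < y /\ forall x, 0 <= x <= 1 -> h x = F (x * y) / F y.

Definition E_FA (F : R -> R) (A : R) : (R -> R) -> Prop :=
  closure01 (dilations F A).

Definition E_F (F : R -> R) (g : R -> R) : Prop :=
  forall A, 0 < A -> E_FA F A g.

Definition conv01 (S : (R -> R) -> Prop) (h : R -> R) : Prop :=
  exists (n : nat) (lam : nat -> R) (gs : nat -> R -> R),
    (forall i, (i <= n)%nat -> 0 <= lam i /\ S (gs i)) /\
    sum_f_R0 lam n = 1 /\
    forall x, 0 <= x <= 1 -> h x = sum_f_R0 (fun i => lam i * gs i x) n.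

Definition C_F (F : R -> R) : (R -> R) -> Prop := closure01 (conv01 (E_F F)).

(* S ≅ {phi} : constant depending on H *)
Definition equiv_each (S : (R -> R) -> Prop) (phi : R -> R) : Prop :=
  forall H, S H -> exists C, 0 < C /\
    forall t, 0 < t <= 1 -> / C * phi t <= H t /\ H t <= C * phi t.

(* S ≡ {phi} : one uniform constant *)
Definition equiv_unif (S : (R -> R) -> Prop) (phi : R -> R) : Prop :=
  exists C, 0 < C /\ forall H, S H ->
    forall t, 0 < t <= 1 -> / C * phi t <= H t /\ H t <= C * phi t.

(* Main.v *)
Require Import Defs.
From Stdlib Require Import Reals.
Open Scope R_scope.
From Stdlib Require Import Arith Lra Lia Psatz ZArith Classical ClassicalEpsilon.

Module NatPart.
Local Open Scope nat_scope.

Definition jt (N : nat) : nat := S (N mod (S (Nat.sqrt N))).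
Definition len (N : nat) : nat := jt N * jt N.
Definition l4 (i : nat) : nat := Nat.log2 i / 2.

Lemma jt_le N : jt N <= S N.
Proof.
  unfold jt. pose proof (Nat.mod_upper_bound N (S (Nat.sqrt N)) ltac:(lia)).
  pose proof (Nat.sqrt_le_lin N). lia.
Qed.

Lemma jt_ge1 N : 1 <= jt N.
Proof. unfold jt; lia. Qed.

Lemma sq_le_pow4 N : S N * S N <= 4 ^ N.
Proof.
  induction N; simpl; [lia|]. nia.
Qed.

Lemma len_le N : len N <= 4 ^ N.
Proof.
  unfold len. pose proof (jt_le N). pose proof (sq_le_pow4 N). nia.
Qed.

Lemma pow4_ge N : S N <= 4 ^ N.
Proof. pose proof (sq_le_pow4 N). nia. Qed.

Lemma pow4_S N : 4 ^ S N = 4 * 4 ^ N.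
Proof. reflexivity. Qed.

Lemma pow4_mono a b : a <= b -> 4 ^ a <= 4 ^ b.
Proof. intros; apply Nat.pow_le_mono_r; lia. Qed.

Lemma pow4_2 N : 4 ^ N = 2 ^ (2 * N).
Proof. rewrite Nat.pow_mul_r. reflexivity. Qed.

Lemma l4_spec i : 1 <= i -> 4 ^ l4 i <= i < 4 ^ S (l4 i).
Proof.
  intros Hi. unfold l4. pose proof (Nat.log2_spec i ltac:(lia)) as [H1 H2].
  set (k := Nat.log2 i) in *.
  pose proof (Nat.div_mod k 2 ltac:(lia)) as Hd.
  pose proof (Nat.mod_upper_bound k 2 ltac:(lia)) as Hm.
  rewrite !pow4_2. split.
  - eapply Nat.le_trans; [|exact H1]. apply Nat.pow_le_mono_r; lia.
  - eapply Nat.lt_le_trans; [exact H2|]. apply Nat.pow_le_mono_r; lia.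
Qed.

Lemma l4_unique N i : 4 ^ N <= i < 4 ^ S N -> l4 i = N.
Proof.
  intros [H1 H2].
  assert (Hi : 1 <= i) by (pose proof (Nat.pow_nonzero 4 N ltac:(lia)); lia).
  pose proof (l4_spec i Hi) as [A B].
  destruct (Nat.lt_trichotomy (l4 i) N) as [Hl|[He|Hg]]; auto.
  - assert (4 ^ S (l4 i) <= 4 ^ N) by (apply pow4_mono; lia). lia.
  - assert (4 ^ S N <= 4 ^ l4 i) by (apply pow4_mono; lia). lia.
Qed.

Lemma cluster_in N d : d < len N -> l4 (4 ^ N + d) = N /\ (4 ^ N + d - 4 ^ N) <? len N = true.
Proof.
  intros Hd. pose proof (len_le N). split.
  - apply l4_unique. rewrite pow4_S. lia.
  - apply Nat.ltb_lt. lia.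
Qed.

Lemma cluster_gap N i : 4 ^ N + len N <= i < 4 ^ S N -> l4 i = N /\ (i - 4 ^ N) <? len N = false.
Proof.
  intros Hd. split.
  - apply l4_unique. lia.
  - apply Nat.ltb_ge. lia.
Qed.

Lemma jt_rec T M : T + 2 <= M -> jt (M * M + T) = T + 2.
Proof.
  intros HM. unfold jt.
  assert (Hs : Nat.sqrt (M * M + T) = M) by (apply Nat.sqrt_unique; nia).
  rewrite Hs.
  assert ((M * M + T) mod S M = T + 1) as ->; [|lia].
  symmetry. apply (Nat.mod_unique _ _ (M - 1)); nia.
Qed.

End NatPart.
Import NatPart.
Open Scope R_scope.

Lemma Rabs_le_between x e : Rabs x <= e -> - e <= x <= e.
Proof. intros H. unfold Rabs in H. destruct (Rcase_abs x); lra. Qed.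

Lemma orl_nonneg F : Orlicz F -> forall z, 0 <= z -> 0 <= F z.
Proof.
  intros [H0 [Hm _]] z Hz. destruct (Req_dec z 0) as [->|Hn]; [lra|].
  rewrite <- H0. left. apply Hm; lra.
Qed.

Lemma orl_pos F : Orlicz F -> forall z, 0 < z -> 0 < F z.
Proof.
  intros [H0 [Hm _]] z Hz. rewrite <- H0. apply Hm; lra.
Qed.

Lemma dil_bounds F : Orlicz F -> forall x y, 0 < y -> 0 <= x <= 1 ->
  0 <= F (x*y) / F y <= x.
Proof.
  intros HF x y Hy Hx. pose proof (orl_pos F HF y Hy) as Hp.
  split.
  - apply Rle_mult_inv_pos; [apply (orl_nonneg F HF); nra | lra].
  - destruct HF as [H0 [Hm [Hc _]]].
    pose proof (Hc y 0 x ltac:(lra) ltac:(lra) Hx) as C.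
    replace (x*y + (1-x)*0) with (x*y) in C by ring. rewrite H0 in C.
    apply (Rmult_le_reg_r (F y)); auto. unfold Rdiv. rewrite Rmult_assoc, Rinv_l; lra.
Qed.

Lemma EF_bounds F : Orlicz F -> forall g, E_F F g -> forall x, 0 <= x <= 1 -> 0 <= g x <= x.
Proof.
  intros HF g Hg x Hx. destruct (Hg 1 ltac:(lra)) as [_ Hcl].
  split.
  - apply Rle_plus_epsilon. intros e He. destruct (Hcl e He) as [h [[y [Hy Hh]] Hd]].
    specialize (Hd x Hx). rewrite Hh in Hd by auto.
    pose proof (dil_bounds F HF x y ltac:(lra) Hx). apply Rabs_le_between in Hd. lra.
  - apply Rle_plus_epsilon. intros e He. destruct (Hcl e He) as [h [[y [Hy Hh]] Hd]].
    specialize (Hd x Hx). rewrite Hh in Hd by auto.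
    pose proof (dil_bounds F HF x y ltac:(lra) Hx). apply Rabs_le_between in Hd. lra.
Qed.

Lemma sum_mul0 (lam : nat -> R) n : sum_f_R0 (fun i => lam i * 0) n = 0.
Proof. induction n; simpl; [ring|rewrite IHn; ring]. Qed.

Lemma sum_mul1 (lam : nat -> R) n : sum_f_R0 (fun i => lam i * 1) n = sum_f_R0 lam n.
Proof. induction n; simpl; [ring|rewrite IHn; ring]. Qed.

Lemma sum_lam_le (lam : nat -> R) (f g : nat -> R) n :
  (forall i, (i <= n)%nat -> 0 <= lam i /\ f i <= g i) ->
  sum_f_R0 (fun i => lam i * f i) n <= sum_f_R0 (fun i => lam i * g i) n.
Proof.
  intros H. apply sum_Rle. intros i Hi. destruct (H i Hi). nra.
Qed.

Lemma sum_lin (lam f : nat -> R) a n :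
  sum_f_R0 (fun i => lam i * (f i * a)) n = sum_f_R0 (fun i => lam i * f i) n * a.
Proof. induction n; simpl; [ring|rewrite IHn; ring]. Qed.

Lemma sum_comb (lam ind : nat -> R) A B n :
  sum_f_R0 (fun i => lam i * (ind i * A + (1 - ind i) * B)) n =
  sum_f_R0 (fun i => lam i * ind i) n * A +
  (sum_f_R0 lam n - sum_f_R0 (fun i => lam i * ind i) n) * B.
Proof. induction n; simpl; [ring|rewrite IHn; ring]. Qed.

Lemma conv_bounds F : Orlicz F -> forall h, conv01 (E_F F) h -> forall x, 0 <= x <= 1 -> 0 <= h x <= x.
Proof.
  intros HF h [n [lam [gs [Hi [Hs Hh]]]]] x Hx. rewrite Hh by auto.
  split.
  - apply Rle_trans with (sum_f_R0 (fun i => lam i * 0) n).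
    + right. rewrite sum_mul0; auto.
    + apply sum_lam_le. intros i Hin. destruct (Hi i Hin) as [Hl Hg].
      split; auto. apply (EF_bounds F HF _ Hg x Hx).
  - apply Rle_trans with (sum_f_R0 (fun i => lam i * (1 * x)) n).
    + apply sum_lam_le. intros i Hin. destruct (Hi i Hin) as [Hl Hg].
      split; auto. pose proof (EF_bounds F HF _ Hg x Hx). lra.
    + rewrite sum_lin.
      rewrite sum_mul1, Hs; lra.
Qed.

Lemma cl_bounds S g : closure01 S g -> (forall h, S h -> forall x, 0 <= x <= 1 -> 0 <= h x <= x) ->
  forall x, 0 <= x <= 1 -> 0 <= g x <= x.
Proof.
  intros [_ Hcl] HS x Hx. split; apply Rle_plus_epsilon; intros e He;
  destruct (Hcl e He) as [h [Hh Hd]]; specialize (Hd x Hx); specialize (HS h Hh x Hx);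
  apply Rabs_le_between in Hd; lra.
Qed.

Lemma cl_disj (S P1 P2 : (R -> R) -> Prop) (g : R -> R) :
  (forall eps, 0 < eps -> exists h, S h /\ forall x, 0 <= x <= 1 -> Rabs (g x - h x) <= eps) ->
  (forall h, S h -> P1 h \/ P2 h) ->
  (forall eps, 0 < eps -> exists h, S h /\ (forall x, 0 <= x <= 1 -> Rabs (g x - h x) <= eps) /\ P1 h) \/
  (forall eps, 0 < eps -> exists h, S h /\ (forall x, 0 <= x <= 1 -> Rabs (g x - h x) <= eps) /\ P2 h).
Proof.
  intros Hcl HS.
  destruct (classic (forall eps, 0 < eps -> exists h, S h /\ (forall x, 0 <= x <= 1 -> Rabs (g x - h x) <= eps) /\ P1 h)) as [Y|N]; [left; auto|right].
  apply not_all_ex_not in N. destruct N as [e1 N].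
  apply imply_to_and in N. destruct N as [He1 N].
  intros e He. destruct (Hcl (Rmin e e1) (Rmin_pos _ _ He He1)) as [h [Hh Hd]].
  exists h. split; auto. split.
  - intros x Hx. specialize (Hd x Hx). pose proof (Rmin_l e e1). lra.
  - destruct (HS h Hh) as [H1|H2]; auto. exfalso. apply N. exists h. repeat split; auto.
    intros x Hx. specialize (Hd x Hx). pose proof (Rmin_r e e1). lra.
Qed.

Lemma lim_lb (S : (R -> R) -> Prop) (D : R -> Prop) (phi g : R -> R) :
  (forall x, D x -> 0 <= x <= 1) ->
  (forall eps, 0 < eps -> exists h, S h /\ (forall x, 0 <= x <= 1 -> Rabs (g x - h x) <= eps) /\
        forall x, D x -> phi x <= h x) ->
  forall x, D x -> phi x <= g x.
Proof.
  intros HD H x Hx. apply Rle_plus_epsilon. intros e He.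
  destruct (H e He) as [h [_ [Hd Hp]]]. specialize (Hd x (HD x Hx)). specialize (Hp x Hx).
  apply Rabs_le_between in Hd. lra.
Qed.

Definition DichoHyp (F : R -> R) : Prop :=
  forall J : nat, exists c, 0 < c /\ forall delta, 0 < delta <= 1 -> exists A, 0 < A /\
    forall y, A < y ->
      (forall x, delta <= x <= 1 -> c * x <= F (x*y) / F y) \/
      (forall x, 0 <= x <= 1 -> x - / INR (S J) <= F (x*y) / F y).

Lemma EF_dicho F : Orlicz F -> DichoHyp F -> forall J : nat, exists c, 0 < c /\
  forall g, E_F F g ->
    (forall x, 0 < x <= 1 -> c * x <= g x) \/ (forall x, 0 < x <= 1 -> x - / INR (S J) <= g x).
Proof.
  intros HF HD J. destruct (HD J) as [c [Hc HJ]]. exists c. split; auto.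
  intros g Hg.
  assert (Hd : forall delta, 0 < delta <= 1 ->
     (forall x, delta <= x <= 1 -> c * x <= g x) \/ (forall x, 0 < x <= 1 -> x - / INR (S J) <= g x)).
  { intros delta Hdl. destruct (HJ delta Hdl) as [A [HA Hy]].
    destruct (Hg A HA) as [_ Hcl].
    destruct (cl_disj (dilations F A)
       (fun h => forall x, delta <= x <= 1 -> c * x <= h x)
       (fun h => forall x, 0 < x <= 1 -> x - / INR (S J) <= h x) g Hcl) as [L|Rr].
    - intros h [y [Hy1 Hh]]. destruct (Hy y Hy1) as [Y1|Y2].
      + left. intros x Hx. rewrite Hh by lra. auto.
      + right. intros x Hx. rewrite Hh by lra. apply Y2; lra.
    - left. apply (lim_lb (dilations F A) _ (fun x => c * x) g); [intros; lra|exact L].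
    - right. apply (lim_lb (dilations F A) _ (fun x => x - / INR (S J)) g); [intros; lra|exact Rr]. }
  destruct (classic (forall x, 0 < x <= 1 -> x - / INR (S J) <= g x)) as [Y|N]; [right; auto|left].
  intros x Hx. destruct (Hd x Hx) as [A|B]; [apply A; lra| contradiction].
Qed.

Lemma conv_dicho F : Orlicz F -> DichoHyp F -> forall J : nat, exists c, 0 < c /\
  forall h, conv01 (E_F F) h ->
    (forall x, 0 < x <= 1 -> c * x <= h x) \/ (forall x, 0 < x <= 1 -> (x - / INR (S J)) / 2 <= h x).
Proof.
  intros HF HD J. destruct (EF_dicho F HF HD J) as [c [Hc HE]]. exists (c/2). split; [lra|].
  intros h [n [lam [gs [Hi [Hs Hh]]]]].
  set (ind := fun i => if excluded_middle_informative (forall x, 0 < x <= 1 -> c * x <= gs i x) then 1 else 0).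
  set (m := sum_f_R0 (fun i => lam i * ind i) n).
  assert (Hind : forall i, ind i = 0 \/ ind i = 1).
  { intros i. unfold ind. destruct excluded_middle_informative; auto. }
  assert (Hm : 0 <= m <= 1).
  { unfold m. split.
    - apply Rle_trans with (sum_f_R0 (fun i => lam i * 0) n).
      + right. rewrite sum_mul0; auto.
      + apply sum_lam_le. intros i Hin. destruct (Hi i Hin). split; auto. destruct (Hind i); lra.
    - rewrite <- Hs. apply Rle_trans with (sum_f_R0 (fun i => lam i * 1) n).
      + apply sum_lam_le. intros i Hin. destruct (Hi i Hin). split; auto. destruct (Hind i); lra.
      + right. apply sum_mul1. }
  assert (Key : forall x, 0 < x <= 1 ->
     m * (c * x) + (1 - m) * Rmax 0 (x - / INR (S J)) <= h x).
  { intros x Hx. rewrite Hh by lra. rewrite <- Hs. unfold m. rewrite <- sum_comb.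
    apply sum_lam_le. intros i Hin. destruct (Hi i Hin) as [Hl Hg]. split; auto.
    pose proof (EF_bounds F HF _ Hg x ltac:(lra)) as Hb.
    unfold ind. destruct excluded_middle_informative as [Y|N].
    - specialize (Y x Hx). lra.
    - destruct (HE _ Hg) as [A|B]; [contradiction|]. specialize (B x Hx).
      assert (Rmax 0 (x - / INR (S J)) <= gs i x) by (apply Rmax_lub; lra). lra. }
  destruct (Rle_dec (1/2) m) as [Hm2|Hm2].
  - left. intros x Hx. specialize (Key x Hx). pose proof (Rmax_l 0 (x - / INR (S J))).
    assert (0 <= (1 - m) * Rmax 0 (x - / INR (S J))) by (apply Rmult_le_pos; lra).
    assert ((c/2) * x <= m * (c * x)) by (assert (0 < c * x) by nra; nra). lra.
  - right. intros x Hx. specialize (Key x Hx). pose proof (Rmax_l 0 (x - / INR (S J))).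
    pose proof (Rmax_r 0 (x - / INR (S J))).
    assert (0 <= m * (c * x)) by (apply Rmult_le_pos; nra).
    assert (Rmax 0 (x - / INR (S J)) / 2 <= (1 - m) * Rmax 0 (x - / INR (S J))) by nra. lra.
Qed.

Lemma CF_equiv F : Orlicz F -> DichoHyp F -> equiv_each (C_F F) (fun t => t).
Proof.
  intros HF HD H HH.
  assert (Hb : forall x, 0 <= x <= 1 -> 0 <= H x <= x).
  { apply (cl_bounds _ _ HH). apply conv_bounds; auto. }
  assert (Hd : forall J : nat, exists c, 0 < c /\
     ((forall x, 0 < x <= 1 -> c * x <= H x) \/ (forall x, 0 < x <= 1 -> (x - / INR (S J)) / 2 <= H x))).
  { intros J. destruct (conv_dicho F HF HD J) as [c [Hc Hh]]. exists c. split; auto.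
    destruct HH as [_ Hcl].
    destruct (cl_disj (conv01 (E_F F)) (fun h => forall x, 0 < x <= 1 -> c * x <= h x)
      (fun h => forall x, 0 < x <= 1 -> (x - / INR (S J)) / 2 <= h x) H Hcl Hh) as [L|Rr].
    - left. apply (lim_lb (conv01 (E_F F)) _ (fun x => c * x) H); [intros; lra|exact L].
    - right. apply (lim_lb (conv01 (E_F F)) _ (fun x => (x - / INR (S J)) / 2) H); [intros; lra|exact Rr]. }
  destruct (classic (exists (J : nat) (c : R), 0 < c /\ forall x, 0 < x <= 1 -> c * x <= H x)) as [[J [c [Hc Hl]]]|N].
  - exists (Rmax 1 (/ c)). split; [pose proof (Rmax_l 1 (/c)); lra|].
    intros t Ht. specialize (Hl t Ht). specialize (Hb t ltac:(lra)).
    pose proof (Rmax_l 1 (/c)). pose proof (Rmax_r 1 (/c)).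
    split.
    + apply Rle_trans with (c * t); auto.
      rewrite <- (Rinv_inv c) at 2. apply Rmult_le_compat_r; [lra|].
      apply Rinv_le_contravar; auto. apply Rinv_0_lt_compat; auto.
    + nra.
  - exists 2. split; [lra|]. intros t Ht. specialize (Hb t ltac:(lra)). split; [|lra].
    apply Rle_plus_epsilon. intros e He.
    destruct (archimed (/ e)) as [Ha _].
    set (J := Z.to_nat (up (/ e))).
    destruct (Hd J) as [c [Hc [A|B]]].
    + exfalso. apply N. exists J, c. auto.
    + specialize (B t Ht).
      assert (HJ : / INR (S J) <= e).
      { assert (0 < / e) by (apply Rinv_0_lt_compat; auto).
        assert (INR J = IZR (up (/e))).
        { unfold J. rewrite INR_IZR_INZ. rewrite Z2Nat.id; auto.
          apply le_IZR. lra. }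
        rewrite S_INR. rewrite <- (Rinv_inv e). apply Rinv_le_contravar; [auto|lra]. }
      lra.
Qed.


Definition binv (i : nat) : R :=
  if Nat.ltb (i - 4 ^ l4 i) (len (l4 i)) then / INR (jt (l4 i)) else 0.

Fixpoint psum (f : nat -> R) (n : nat) : R :=
  match n with O => 0 | S k => psum f k + f k end.

Definition Lam := psum binv.
Definition sig (n : nat) : R := exp (Lam n).
Definition w (i : nat) : R := sig (S i) - sig i.

Fixpoint sw (k : nat) (z : R) : R :=
  match k with O => 0 | S k' => sw k' z + w k' * Rmax 0 (z - 2 ^ k') end.
Fixpoint Iw (k : nat) : R :=
  match k with O => 0 | S k' => Iw k' + w k' * 2 ^ k' end.
Definition PhiK (k : nat) (z : R) : R := z + sw k z.
Definition nz (z : R) : nat := Z.to_nat (up z).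
Definition Phi (z : R) : R := PhiK (nz z) z.

Lemma INR_jt_pos N : 0 < INR (jt N).
Proof. apply lt_0_INR. pose proof (jt_ge1 N); lia. Qed.

Lemma binv_ge0 i : 0 <= binv i.
Proof. unfold binv. destruct Nat.ltb; [|lra]. left; apply Rinv_0_lt_compat, INR_jt_pos. Qed.

Lemma binv_le1 i : binv i <= 1.
Proof.
  unfold binv. destruct Nat.ltb; [|lra].
  pose proof (jt_ge1 (l4 i)) as H. apply le_INR in H. change (INR 1) with 1 in H.
  assert (/ INR (jt (l4 i)) <= / 1) by (apply Rinv_le_contravar; lra). rewrite Rinv_1 in H0; lra.
Qed.

Lemma psum_mono f k n : (forall i, 0 <= f i) -> (k <= n)%nat -> psum f k <= psum f n.
Proof.
  intros Hf H. induction H; [lra|]. simpl. specialize (Hf m). lra.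
Qed.

Lemma psum_le f g k q : (k <= q)%nat -> (forall i, (k <= i < q)%nat -> f i <= g i) ->
  psum f q - psum f k <= psum g q - psum g k.
Proof.
  intros H. induction H; intros Hfg; [lra|]. simpl.
  assert (f m <= g m) by (apply Hfg; lia).
  assert (psum f m - psum f k <= psum g m - psum g k) by (apply IHle; intros; apply Hfg; lia).
  lra.
Qed.

Lemma psum_const a q : psum (fun _ => a) q = INR q * a.
Proof. induction q; simpl psum; [simpl; ring|rewrite IHq, S_INR; ring]. Qed.

Lemma sig_pos n : 0 < sig n.
Proof. apply exp_pos. Qed.

Lemma w_ge0 i : 0 <= w i.
Proof.
  unfold w, sig, Lam. simpl. pose proof (binv_ge0 i).
  destruct (Req_dec (binv i) 0) as [E|E].
  - rewrite E, Rplus_0_r. lra.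
  - left. apply Rlt_0_minus. apply exp_increasing. lra.
Qed.

Lemma w_zero i : binv i = 0 -> w i = 0.
Proof. intros H. unfold w, sig, Lam. simpl. rewrite H, Rplus_0_r. ring. Qed.

Lemma pow2_gt n : INR n < 2 ^ n.
Proof.
  induction n; [simpl; lra|]. rewrite S_INR. change (2 ^ S n) with (2 * 2 ^ n).
  assert (1 <= 2 ^ n) by (apply pow_R1_Rle; lra). lra.
Qed.

Lemma pow2_pos n : 0 < 2 ^ n.
Proof. apply pow_lt; lra. Qed.

Lemma pow2_mono a b : (a <= b)%nat -> 2 ^ a <= 2 ^ b.
Proof. intros; apply Rle_pow; [lra|auto]. Qed.

Lemma sw_ge0 k z : 0 <= sw k z.
Proof.
  induction k; simpl; [lra|]. pose proof (w_ge0 k). pose proof (Rmax_l 0 (z - 2^k)).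
  assert (0 <= w k * Rmax 0 (z - 2 ^ k)) by (apply Rmult_le_pos; lra). lra.
Qed.

Lemma sw_mono_k k d z : sw k z <= sw (k + d) z.
Proof.
  induction d; [rewrite Nat.add_0_r; lra|]. rewrite Nat.add_succ_r. simpl.
  pose proof (w_ge0 (k+d)). pose proof (Rmax_l 0 (z - 2^(k+d))).
  assert (0 <= w (k+d) * Rmax 0 (z - 2 ^ (k+d))) by (apply Rmult_le_pos; lra). lra.
Qed.

Lemma sw_ext k d z : z <= 2 ^ k -> sw (k + d) z = sw k z.
Proof.
  intros Hz. induction d; [rewrite Nat.add_0_r; lra|]. rewrite Nat.add_succ_r. simpl.
  rewrite IHd. assert (2 ^ k <= 2 ^ (k + d)) by (apply pow2_mono; lia).
  rewrite Rmax_left by lra. ring.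
Qed.

Lemma nz_spec z : z <= 2 ^ nz z.
Proof.
  unfold nz. destruct (archimed z) as [H1 _].
  destruct (Rle_dec z 0).
  - pose proof (pow2_pos (Z.to_nat (up z))). lra.
  - assert (0 <= up z)%Z by (apply le_IZR; lra).
    pose proof (pow2_gt (Z.to_nat (up z))). rewrite INR_IZR_INZ, Z2Nat.id in H0 by auto. lra.
Qed.

Lemma Phi_eq k z : z <= 2 ^ k -> Phi z = PhiK k z.
Proof.
  intros Hz. unfold Phi, PhiK. f_equal.
  pose proof (nz_spec z).
  destruct (Nat.le_ge_cases k (nz z)) as [H1|H1].
  - replace (nz z) with (k + (nz z - k))%nat by lia. apply sw_ext; auto.
  - replace k with (nz z + (k - nz z))%nat by lia. symmetry. apply sw_ext; auto.
Qed.

Lemma Phi_ge_K k z : PhiK k z <= Phi z.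
Proof.
  destruct (Nat.le_ge_cases k (nz z)) as [H1|H1].
  - unfold Phi, PhiK. replace (nz z) with (k + (nz z - k))%nat by lia.
    pose proof (sw_mono_k k (nz z - k) z). lra.
  - rewrite (Phi_eq k z); [lra|]. eapply Rle_trans; [apply nz_spec|]. apply pow2_mono; auto.
Qed.

Lemma Phi_ge z : z <= Phi z.
Proof. unfold Phi, PhiK. pose proof (sw_ge0 (nz z) z). lra. Qed.

Lemma sw_upper k z : 0 <= z -> sw k z <= (sig k - 1) * z.
Proof.
  intros Hz. induction k.
  - simpl. unfold sig, Lam; simpl. rewrite exp_0. lra.
  - simpl sw. assert (Rmax 0 (z - 2^k) <= z).
    { apply Rmax_lub; [lra|]. pose proof (pow2_pos k); lra. }
    pose proof (w_ge0 k). assert (w k * Rmax 0 (z - 2^k) <= w k * z) by (apply Rmult_le_compat_l; lra).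
    unfold w in *. lra.
Qed.

Lemma sw_lower k z : (sig k - 1) * z - Iw k <= sw k z.
Proof.
  induction k.
  - simpl. unfold sig, Lam; simpl. rewrite exp_0. lra.
  - simpl sw. simpl Iw. pose proof (Rmax_r 0 (z - 2^k)).
    pose proof (w_ge0 k). assert (w k * (z - 2^k) <= w k * Rmax 0 (z - 2^k)) by (apply Rmult_le_compat_l; lra).
    unfold w in *. lra.
Qed.

Lemma Iw_bound e k : (forall i, (e <= i < k)%nat -> w i = 0) -> Iw k <= 2 ^ e * (sig k - 1).
Proof.
  induction k; intros Hw.
  - simpl. unfold sig, Lam; simpl. rewrite exp_0. lra.
  - simpl Iw. assert (IH : Iw k <= 2 ^ e * (sig k - 1)) by (apply IHk; intros; apply Hw; lia).
    destruct (Nat.lt_ge_cases k e) as [H|H].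
    + assert (2 ^ k <= 2 ^ e) by (apply pow2_mono; lia). pose proof (w_ge0 k).
      assert (w k * 2^k <= w k * 2^e) by (apply Rmult_le_compat_l; lra).
      unfold w in *. lra.
    + pose proof (Hw k ltac:(lia)) as Hk. rewrite Hk. unfold w in Hk.
      replace (sig (S k)) with (sig k) by lra. lra.
Qed.

Lemma Phi_0 : Phi 0 = 0.
Proof. rewrite (Phi_eq 0) by (simpl; lra). unfold PhiK. simpl. ring. Qed.

Lemma Rmax0_mono a b : a <= b -> Rmax 0 a <= Rmax 0 b.
Proof. intros. unfold Rmax. destruct Rle_dec; destruct Rle_dec; lra. Qed.

Lemma Rmax0_convex s t l c : 0 <= l <= 1 ->
  Rmax 0 (l * s + (1 - l) * t - c) <= l * Rmax 0 (s - c) + (1 - l) * Rmax 0 (t - c).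
Proof.
  intros Hl. pose proof (Rmax_l 0 (s - c)). pose proof (Rmax_r 0 (s - c)).
  pose proof (Rmax_l 0 (t - c)). pose proof (Rmax_r 0 (t - c)).
  apply Rmax_lub; nra.
Qed.

Lemma sw_mono_z k s t : s <= t -> sw k s <= sw k t.
Proof.
  intros H. induction k; simpl; [lra|]. pose proof (w_ge0 k).
  assert (w k * Rmax 0 (s - 2^k) <= w k * Rmax 0 (t - 2^k)) by (apply Rmult_le_compat_l; auto; apply Rmax0_mono; lra).
  lra.
Qed.

Lemma sw_convex k s t l : 0 <= l <= 1 -> sw k (l * s + (1 - l) * t) <= l * sw k s + (1 - l) * sw k t.
Proof.
  intros Hl. induction k; simpl; [lra|]. pose proof (w_ge0 k).
  pose proof (Rmax0_convex s t l (2^k) Hl).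
  assert (w k * Rmax 0 (l * s + (1 - l) * t - 2^k) <= w k * (l * Rmax 0 (s - 2 ^ k) + (1 - l) * Rmax 0 (t - 2 ^ k))) by (apply Rmult_le_compat_l; auto).
  nra.
Qed.

Lemma Phi_Orlicz : Orlicz Phi.
Proof.
  split; [apply Phi_0|]. split; [|split].
  - intros s t Hs Hst. set (k := nz t).
    rewrite (Phi_eq k t) by apply nz_spec. rewrite (Phi_eq k s) by (pose proof (nz_spec t); fold k in H; lra).
    unfold PhiK. pose proof (sw_mono_z k s t ltac:(lra)). lra.
  - intros s t l Hs Ht Hl. set (k := (nz s + nz t)%nat).
    assert (Hs2 : s <= 2 ^ k) by (eapply Rle_trans; [apply nz_spec|apply pow2_mono; unfold k; lia]).
    assert (Ht2 : t <= 2 ^ k) by (eapply Rle_trans; [apply nz_spec|apply pow2_mono; unfold k; lia]).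
    rewrite (Phi_eq k s Hs2), (Phi_eq k t Ht2), (Phi_eq k) by nra.
    unfold PhiK. pose proof (sw_convex k s t l Hl). lra.
  - intros M. exists M. intros t Ht. pose proof (Phi_ge t). lra.
Qed.

Lemma Phi_nonneg z : 0 <= z -> 0 <= Phi z.
Proof. intros. pose proof (Phi_ge z). lra. Qed.


Lemma Phi_upper k z : 0 <= z -> z <= 2 ^ k -> Phi z <= sig k * z.
Proof. intros H1 H2. rewrite (Phi_eq k z H2). unfold PhiK. pose proof (sw_upper k z H1). lra. Qed.

Lemma Phi_lower k z : sig k * (z - 2 ^ k) <= Phi z.
Proof.
  pose proof (Phi_ge_K k z). unfold PhiK in H. pose proof (sw_lower k z).
  assert (Iw k <= 2 ^ k * (sig k - 1)) by (apply Iw_bound; intros; exfalso; lia).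
  replace (sig k * (z - 2 ^ k)) with (z + ((sig k - 1) * z - 2 ^ k * (sig k - 1)) - 2^k) by ring.
  pose proof (pow2_pos k). lra.
Qed.

Lemma sig_ratio k n : sig k / sig n = exp (- (Lam n - Lam k)).
Proof.
  unfold sig. replace (- (Lam n - Lam k)) with (Lam k + - Lam n) by ring.
  rewrite exp_plus, exp_Ropp. reflexivity.
Qed.

Lemma dil_lb n k x y : (k <= n)%nat -> 0 <= x -> 2 ^ n <= y <= 2 ^ S n ->
  exp (- (Lam (S n) - Lam k)) * (x - 2 ^ k / 2 ^ n) <= Phi (x * y) / Phi y.
Proof.
  intros Hk Hx Hy. pose proof (pow2_pos n). pose proof (pow2_pos k).
  assert (Hyp : 0 < Phi y) by (pose proof (Phi_ge y); lra).
  assert (Hf : 0 <= Phi (x * y) / Phi y) by (apply Rle_mult_inv_pos; [apply Phi_nonneg; nra|auto]).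
  set (R0 := x - 2 ^ k / 2 ^ n).
  pose proof (exp_pos (- (Lam (S n) - Lam k))) as He.
  destruct (Rle_dec R0 0) as [Hr|Hr].
  - assert (exp (- (Lam (S n) - Lam k)) * R0 <= 0) by nra. lra.
  - assert (H1 : Phi y <= sig (S n) * y) by (apply Phi_upper; lra).
    assert (H2 : sig k * (x * y - 2 ^ k) <= Phi (x * y)) by apply Phi_lower.
    assert (H3 : y * R0 <= x * y - 2 ^ k).
    { unfold R0. assert (2 ^ k <= y * (2 ^ k / 2 ^ n)).
      { unfold Rdiv. replace (y * (2 ^ k * / 2 ^ n)) with (2 ^ k * (y / 2 ^ n)) by (field; lra).
        assert (1 <= y / 2 ^ n). { apply (Rmult_le_reg_r (2 ^ n)); auto. unfold Rdiv. rewrite Rmult_assoc, Rinv_l; lra. }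
        nra. }
      nra. }
    assert (Hsr : exp (- (Lam (S n) - Lam k)) * sig (S n) = sig k).
    { rewrite <- sig_ratio. field. pose proof (sig_pos (S n)); lra. }
    pose proof (sig_pos k). pose proof (sig_pos (S n)).
    apply (Rmult_le_reg_r (Phi y)); auto.
    replace (Phi (x*y) / Phi y * Phi y) with (Phi (x*y)) by (field; lra).
    apply Rle_trans with (exp (- (Lam (S n) - Lam k)) * R0 * (sig (S n) * y)).
    + apply Rmult_le_compat_l; [nra|auto].
    + replace (exp (- (Lam (S n) - Lam k)) * R0 * (sig (S n) * y)) with (sig k * (y * R0)) by (rewrite <- Hsr; ring).
      nra.
Qed.


Definition indR (B L i : nat) : R := if andb (Nat.leb B i) (Nat.ltb i (B + L)) then 1 else 0.

Lemma indR_ge0 B L i : 0 <= indR B L i.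
Proof. unfold indR. destruct andb; lra. Qed.

Lemma psum_indR B L q : psum (indR B L) q = INR (Nat.min q (B + L) - B).
Proof.
  induction q; [simpl; reflexivity|]. simpl psum. rewrite IHq. unfold indR.
  destruct (Nat.leb_spec B q); destruct (Nat.ltb_spec q (B + L)); simpl andb.
  - replace (Nat.min (S q) (B + L) - B)%nat with (S (Nat.min q (B + L) - B)) by lia.
    rewrite S_INR. ring.
  - replace (Nat.min (S q) (B + L) - B)%nat with (Nat.min q (B + L) - B)%nat by lia. ring.
  - replace (Nat.min (S q) (B + L) - B)%nat with (Nat.min q (B + L) - B)%nat by lia. ring.
  - replace (Nat.min (S q) (B + L) - B)%nat with (Nat.min q (B + L) - B)%nat by lia. ring.
Qed.

Lemma psum_indR_le B L q : psum (indR B L) q <= INR L.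
Proof. rewrite psum_indR. apply le_INR. lia. Qed.

Lemma binv_nz i : binv i <> 0 -> (1 <= i)%nat ->
  (4 ^ l4 i <= i < 4 ^ l4 i + len (l4 i))%nat /\ binv i = / INR (jt (l4 i)).
Proof.
  intros H Hi. unfold binv in *. pose proof (l4_spec i Hi).
  destruct (Nat.ltb_spec (i - 4 ^ l4 i) (len (l4 i))); [|lra].
  split; [lia|reflexivity].
Qed.

Lemma window W n i0 : (n - W <= i0 <= n)%nat -> (8 * W + 8 <= i0)%nat -> binv i0 <> 0 ->
  forall i, (n - W <= i <= n)%nat -> binv i <= / INR (jt (l4 i0)) * indR (4 ^ l4 i0) (len (l4 i0)) i.
Proof.
  intros Hi0 Hb Hnz i Hi.
  pose proof (Rinv_0_lt_compat _ (INR_jt_pos (l4 i0))) as Hjp.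
  destruct (Req_dec (binv i) 0) as [Z|Z].
  - rewrite Z. pose proof (indR_ge0 (4 ^ l4 i0) (len (l4 i0)) i). nra.
  - destruct (binv_nz i0 Hnz ltac:(lia)) as [[A0 B0] E0].
    destruct (binv_nz i Z ltac:(lia)) as [[A1 B1] E1].
    pose proof (len_le (l4 i0)). pose proof (len_le (l4 i)).
    assert (Heq : l4 i = l4 i0).
    { destruct (Nat.lt_trichotomy (l4 i) (l4 i0)) as [Hl|[He|Hg]]; auto; exfalso.
      - destruct (l4 i0) as [|N0] eqn:EN; [lia|].
        assert (4 ^ l4 i <= 4 ^ N0)%nat by (apply pow4_mono; lia).
        rewrite pow4_S in *. lia.
      - assert (4 ^ S (l4 i0) <= 4 ^ l4 i)%nat by (apply pow4_mono; lia).
        rewrite pow4_S in *. lia. }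
    rewrite E1, Heq. unfold indR. rewrite Heq in A1, B1.
    destruct (Nat.leb_spec (4 ^ l4 i0) i); [|lia].
    destruct (Nat.ltb_spec i (4 ^ l4 i0 + len (l4 i0))); [|lia]. simpl. lra.
Qed.

Lemma exp_mono a b : a <= b -> exp a <= exp b.
Proof. intros [H|H]; [left; apply exp_increasing; auto|subst; lra]. Qed.

Lemma pow2_ge n : INR n + 1 <= 2 ^ n.
Proof.
  induction n; [simpl; lra|]. rewrite S_INR. change (2 ^ S n) with (2 * 2 ^ n).
  assert (1 <= 2 ^ n) by (apply pow_R1_Rle; lra). lra.
Qed.

Lemma dyadic_aux k : forall y, 1 <= y < 2 ^ k -> exists n, 2 ^ n <= y < 2 ^ S n.
Proof.
  induction k; intros y Hy; [simpl in Hy; lra|].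
  destruct (Rlt_dec y (2 ^ k)) as [H|H].
  - apply IHk; lra.
  - exists k. lra.
Qed.

Lemma dyadic y : 1 <= y -> exists n, 2 ^ n <= y < 2 ^ S n.
Proof.
  intros Hy. apply (dyadic_aux (Z.to_nat (up y))). split; auto.
  destruct (archimed y) as [H1 _]. assert (0 <= up y)%Z by (apply le_IZR; lra).
  pose proof (pow2_gt (Z.to_nat (up y))). rewrite INR_IZR_INZ, Z2Nat.id in H0 by auto. lra.
Qed.

Lemma pow2_div k n : (k <= n)%nat -> 2 ^ k / 2 ^ n = / 2 ^ (n - k).
Proof.
  intros H. replace (2 ^ n) with (2 ^ k * 2 ^ (n - k)) by (rewrite <- pow_add; f_equal; lia).
  pose proof (pow2_pos k). pose proof (pow2_pos (n - k)). field. lra.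
Qed.

Lemma Phi_dicho : DichoHyp Phi.
Proof.
  intros J.
  set (m := (2 * S J)%nat).
  set (J0 := 2 * INR (S J) * (INR m + 2)).
  assert (HJ1 : 1 <= INR (S J)) by (rewrite S_INR; pose proof (pos_INR J); lra).
  assert (Hm0 : 0 <= INR m) by apply pos_INR.
  assert (HJ0 : 0 < J0) by (unfold J0; nra).
  set (al := / J0).
  assert (Hal : 0 < al) by (apply Rinv_0_lt_compat; auto).
  exists (exp (- J0) / 2). split; [pose proof (exp_pos (- J0)); lra|].
  intros delta Hd.
  destruct (archimed (2 / delta)) as [Hs _].
  set (s := Z.to_nat (up (2 / delta))).
  assert (Hs2 : 2 / delta <= 2 ^ s).
  { assert (0 < 2 / delta) by (unfold Rdiv; apply Rmult_lt_0_compat; [lra|apply Rinv_0_lt_compat; lra]).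
    assert (0 <= up (2 / delta))%Z by (apply le_IZR; lra).
    pose proof (pow2_gt s). unfold s in H1. rewrite INR_IZR_INZ, Z2Nat.id in H1 by auto. fold s in H1. lra. }
  set (W := Nat.max s (S J + m)).
  set (n0 := (9 * W + 8)%nat).
  exists (2 ^ n0). split; [apply pow2_pos|].
  intros y Hy.
  assert (Hy1 : 1 <= y) by (pose proof (pow_R1_Rle 2 n0 ltac:(lra)); lra).
  destruct (dyadic y Hy1) as [n Hn].
  assert (Hnn : (n0 <= n)%nat).
  { destruct (Nat.le_gt_cases n0 n) as [H|H]; auto. exfalso.
    assert (2 ^ S n <= 2 ^ n0) by (apply pow2_mono; lia). lra. }
  assert (Hyp : 0 < Phi y) by (pose proof (Phi_ge y); lra).
  destruct (classic (forall i, (n - W <= i <= n)%nat -> binv i <= al)) as [Hall|Hnot].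
  -
    right. intros x Hx.
    assert (Hf0 : 0 <= Phi (x * y) / Phi y) by (apply Rle_mult_inv_pos; [apply Phi_nonneg; nra|auto]).
    destruct (Req_dec x 0) as [X0|X0].
    { subst x. pose proof (Rinv_0_lt_compat _ (lt_0_INR (S J) ltac:(lia))). lra. }
    assert (Hx1 : 1 <= / x).
    { replace 1 with (/ 1) by apply Rinv_1. apply Rinv_le_contravar; lra. }
    destruct (dyadic (/ x) Hx1) as [r Hr].
    assert (Hxr : x <= / 2 ^ r).
    { rewrite <- (Rinv_inv x). apply Rinv_le_contravar; [apply pow2_pos|lra]. }
    destruct (Nat.le_gt_cases (S J) r) as [Hrr|Hrr].
    + assert (/ 2 ^ r <= / INR (S J)).
      { apply Rinv_le_contravar; [lra|]. pose proof (pow2_gt r). pose proof (le_INR _ _ Hrr). lra. }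
      lra.
    + set (k := (n - (r + 1 + m))%nat).
      assert (Hk : (k <= n)%nat) by (unfold k; lia).
      pose proof (dil_lb n k x y Hk ltac:(lra) ltac:(lra)) as Hdl.
      rewrite pow2_div in Hdl by auto.
      replace (n - k)%nat with (r + 1 + m)%nat in Hdl by (unfold k, W in *; lia).
      set (S' := Lam (S n) - Lam k) in *.
      assert (HS' : S' <= INR (S n - k) * al).
      { assert (psum binv (S n) - psum binv k <= psum (fun _ => al) (S n) - psum (fun _ => al) k).
        { apply psum_le; [lia|]. intros i Hi. apply Hall. unfold k, W in *; lia. }
        rewrite !psum_const in H. rewrite minus_INR by lia. rewrite Rmult_minus_distr_r.
        unfold S', Lam. lra. }
      replace (S n - k)%nat with (r + 2 + m)%nat in HS' by (unfold k, W in *; lia).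
      assert (HS0 : 0 <= S') by (unfold S', Lam; pose proof (psum_mono binv k (S n) binv_ge0 ltac:(lia)); lra).
      pose proof (exp_ineq1_le (- S')) as Hei.
      assert (Hle1 : exp (- S') <= 1) by (rewrite <- exp_0; apply exp_mono; lra).
      pose proof (exp_pos (- S')).
      assert (Hp : 0 < 2 ^ (r + 1 + m)) by apply pow2_pos.
      assert (H1 : x - Phi (x * y) / Phi y <= x * S' + / 2 ^ (r + 1 + m)).
      { assert (x * (1 - exp (- S')) <= x * S') by (apply Rmult_le_compat_l; lra).
        assert (exp (- S') * / 2 ^ (r + 1 + m) <= / 2 ^ (r + 1 + m)).
        { assert (0 < / 2 ^ (r + 1 + m)) by (apply Rinv_0_lt_compat; auto). nra. }
        nra. }
      assert (H2 : x * S' <= / (2 * INR (S J))).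
      { apply Rle_trans with (/ 2 ^ r * (INR (r + 2 + m) * al)).
        - assert (0 <= x) by lra. apply Rmult_le_compat; lra.
        - pose proof (pow2_ge r). pose proof (pow2_pos r).
          rewrite !plus_INR. change (INR 2) with 2.
          unfold al, J0. assert (0 < INR (S J)) by lra.
          assert (0 <= INR r) by apply pos_INR.
          assert (Hq : INR r + 2 + INR m <= 2 ^ r * (INR m + 2)) by nra.
          assert (HD : 0 < 2 ^ r * (2 * INR (S J) * (INR m + 2))).
          { apply Rmult_lt_0_compat; [lra|]. apply Rmult_lt_0_compat; lra. }
          replace (/ 2 ^ r * ((INR r + 2 + INR m) * / (2 * INR (S J) * (INR m + 2))))
            with ((INR r + 2 + INR m) * / (2 ^ r * (2 * INR (S J) * (INR m + 2)))) by (field; lra).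
          replace (/ (2 * INR (S J))) with ((2 ^ r * (INR m + 2)) * / (2 ^ r * (2 * INR (S J) * (INR m + 2)))) by (field; lra).
          apply Rmult_le_compat_r; [left; apply Rinv_0_lt_compat; auto|auto]. }
      assert (H3 : / 2 ^ (r + 1 + m) <= / (2 * INR (S J))).
      { apply Rinv_le_contravar; [lra|].
        pose proof (pow2_ge (r + 1 + m)) as Hp3. rewrite !plus_INR in Hp3.
        assert (INR m = 2 * INR (S J)) by (unfold m; rewrite mult_INR; reflexivity). change (INR 1) with 1 in Hp3.
        pose proof (pos_INR r). lra. }
      assert (/ (2 * INR (S J)) + / (2 * INR (S J)) = / INR (S J)) by (field; lra).
      lra.
  -
    left. apply not_all_ex_not in Hnot. destruct Hnot as [i0 Hi0].
    apply imply_to_and in Hi0. destruct Hi0 as [Hi0 Hb0]. apply Rnot_le_lt in Hb0.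
    assert (Hnz : binv i0 <> 0) by lra.
    assert (Hi0b : (8 * W + 8 <= i0)%nat) by (unfold n0 in Hnn; lia).
    pose proof (window W n i0 Hi0 Hi0b Hnz) as Hwin.
    destruct (binv_nz i0 Hnz ltac:(lia)) as [_ E0].
    set (j := jt (l4 i0)) in *.
    pose proof (INR_jt_pos (l4 i0)) as Hjp. fold j in Hjp.
    assert (HjJ : INR j < J0).
    { rewrite E0 in Hb0. unfold al in Hb0. destruct (Rlt_le_dec (INR j) J0) as [Hl|Hl]; auto. exfalso.
      assert (/ INR j <= / J0) by (apply Rinv_le_contravar; lra). lra. }
    intros x Hx.
    assert (Hsn : (s <= n)%nat) by (unfold n0, W in Hnn; lia).
    pose proof (dil_lb n (n - s) x y ltac:(lia) ltac:(lra) ltac:(lra)) as Hdl.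
    rewrite pow2_div in Hdl by lia.
    replace (n - (n - s))%nat with s in Hdl by lia.
    assert (HS : Lam (S n) - Lam (n - s) <= J0).
    { set (ind := indR (4 ^ l4 i0) (len (l4 i0))).
      assert (Lam (S n) - Lam (n - s) <= psum (fun i => / INR j * ind i) (S n) - psum (fun i => / INR j * ind i) (n - s)).
      { unfold Lam. apply psum_le; [lia|]. intros i Hi. apply Hwin. unfold W in *; lia. }
      assert (Hps : forall q, psum (fun i => / INR j * ind i) q = / INR j * psum ind q).
      { clear -j. induction q; [simpl; ring|]. change (psum (fun i => / INR j * ind i) (S q)) with (psum (fun i => / INR j * ind i) q + / INR j * ind q).
        change (psum ind (S q)) with (psum ind q + ind q). rewrite IHq; ring. }
      rewrite !Hps in H.
      pose proof (psum_indR_le (4 ^ l4 i0) (len (l4 i0)) (S n)). fold ind in H0.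
      pose proof (psum_mono ind O (n - s) (indR_ge0 _ _) ltac:(lia)). simpl in H1.
      assert (/ INR j * INR (len (l4 i0)) = INR j).
      { unfold len. fold j. rewrite mult_INR. field. lra. }
      assert (0 < / INR j) by (apply Rinv_0_lt_compat; lra).
      nra. }
    assert (Hed : exp (- J0) <= exp (- (Lam (S n) - Lam (n - s)))) by (apply exp_mono; lra).
    assert (Hsd : / 2 ^ s <= delta / 2).
    { assert (0 < 2 / delta) by (unfold Rdiv; apply Rmult_lt_0_compat; [lra|apply Rinv_0_lt_compat; lra]).
      replace (delta / 2) with (/ (2 / delta)) by (field; lra).
      apply Rinv_le_contravar; lra. }
    pose proof (exp_pos (- J0)).
    assert (x / 2 <= x - / 2 ^ s) by lra.
    apply Rle_trans with (exp (- (Lam (S n) - Lam (n - s))) * (x - / 2 ^ s)); auto.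
    apply Rle_trans with (exp (- J0) * (x / 2)); [lra|].
    apply Rmult_le_compat; lra.
Qed.


Definition cc (j k : nat) : R := exp (INR (S k) / INR j) - exp (INR k / INR j).
Fixpoint ps (j k : nat) (u : R) : R :=
  match k with O => 0 | S k' => ps j k' u + cc j k' * Rmax 0 (u - 2 ^ k') end.
Definition Psi (j : nat) (u : R) : R := u + ps j (j * j) u.
Definition gj (j : nat) (x : R) : R := Psi j (2 ^ (j * j) * x) / Psi j (2 ^ (j * j)).

Lemma cc_ge0 j k : (1 <= j)%nat -> 0 <= cc j k.
Proof.
  intros Hj. unfold cc. assert (0 < INR j) by (apply lt_0_INR; lia).
  assert (INR k / INR j <= INR (S k) / INR j).
  { unfold Rdiv. apply Rmult_le_compat_r; [left; apply Rinv_0_lt_compat; auto|]. rewrite S_INR; lra. }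
  pose proof (exp_mono _ _ H0). lra.
Qed.

Lemma ps_ge0 j k u : (1 <= j)%nat -> 0 <= ps j k u.
Proof.
  intros Hj. induction k; simpl; [lra|]. pose proof (cc_ge0 j k Hj). pose proof (Rmax_l 0 (u - 2^k)).
  assert (0 <= cc j k * Rmax 0 (u - 2 ^ k)) by (apply Rmult_le_pos; lra). lra.
Qed.

Lemma ps_mono j k u v : (1 <= j)%nat -> u <= v -> ps j k u <= ps j k v.
Proof.
  intros Hj H. induction k; simpl; [lra|]. pose proof (cc_ge0 j k Hj).
  assert (cc j k * Rmax 0 (u - 2^k) <= cc j k * Rmax 0 (v - 2^k)) by (apply Rmult_le_compat_l; auto; apply Rmax0_mono; lra).
  lra.
Qed.

Lemma Rmax0_lip a b : Rabs (Rmax 0 a - Rmax 0 b) <= Rabs (a - b).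
Proof.
  unfold Rmax. destruct Rle_dec; destruct Rle_dec; unfold Rabs; repeat destruct Rcase_abs; lra.
Qed.

Lemma ps_lip j k u v : (1 <= j)%nat ->
  Rabs (ps j k u - ps j k v) <= (exp (INR k / INR j) - 1) * Rabs (u - v).
Proof.
  intros Hj. induction k.
  - simpl. unfold Rdiv. rewrite Rmult_0_l, exp_0. rewrite Rminus_0_r, Rabs_R0. lra.
  - simpl ps. pose proof (cc_ge0 j k Hj).
    replace (ps j k u + cc j k * Rmax 0 (u - 2 ^ k) - (ps j k v + cc j k * Rmax 0 (v - 2 ^ k)))
      with ((ps j k u - ps j k v) + cc j k * (Rmax 0 (u - 2 ^ k) - Rmax 0 (v - 2 ^ k))) by ring.
    eapply Rle_trans; [apply Rabs_triang|]. rewrite Rabs_mult, (Rabs_right (cc j k)) by lra.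
    pose proof (Rmax0_lip (u - 2^k) (v - 2^k)).
    replace (u - 2 ^ k - (v - 2 ^ k)) with (u - v) in H0 by ring.
    assert (cc j k * Rabs (Rmax 0 (u - 2 ^ k) - Rmax 0 (v - 2 ^ k)) <= cc j k * Rabs (u - v)) by (apply Rmult_le_compat_l; lra).
    unfold cc in *. lra.
Qed.

Lemma ps_at1 j k : ps j k 1 = 0.
Proof.
  induction k; simpl; [reflexivity|]. rewrite IHk.
  assert (1 <= 2 ^ k) by (apply pow_R1_Rle; lra). rewrite Rmax_left by lra. ring.
Qed.

Lemma ps_big j L k : (1 <= j)%nat -> (k <= L)%nat -> 2 ^ L / 2 * (exp (INR k / INR j) - 1) <= ps j k (2 ^ L).
Proof.
  intros Hj. induction k; intros Hk.
  - simpl. unfold Rdiv at 2. rewrite Rmult_0_l, exp_0. lra.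
  - simpl ps. pose proof (IHk ltac:(lia)). pose proof (cc_ge0 j k Hj).
    assert (2 ^ L / 2 <= Rmax 0 (2 ^ L - 2 ^ k)).
    { eapply Rle_trans; [|apply Rmax_r]. destruct L as [|L]; [lia|].
      assert (2 ^ k <= 2 ^ L) by (apply pow2_mono; lia). change (2 ^ S L) with (2 * 2 ^ L). lra. }
    assert (cc j k * (2 ^ L / 2) <= cc j k * Rmax 0 (2 ^ L - 2 ^ k)) by (apply Rmult_le_compat_l; auto).
    unfold cc in *. lra.
Qed.


Lemma binv_cluster N d : (d < len N)%nat -> binv (4 ^ N + d) = / INR (jt N).
Proof.
  intros Hd. destruct (cluster_in N d Hd) as [E1 E2]. unfold binv. rewrite E1, E2. reflexivity.
Qed.

Lemma Lam_cluster N d : (d <= len N)%nat -> Lam (4 ^ N + d) = Lam (4 ^ N) + INR d / INR (jt N).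
Proof.
  intros Hd. induction d.
  - rewrite Nat.add_0_r. unfold Rdiv. simpl. ring.
  - rewrite Nat.add_succ_r. unfold Lam in *. simpl psum. rewrite IHd by lia.
    fold Lam. rewrite binv_cluster by lia. rewrite S_INR. field. apply Rgt_not_eq, INR_jt_pos.
Qed.

Lemma sig_cluster N d : (d <= len N)%nat -> sig (4 ^ N + d) = sig (4 ^ N) * exp (INR d / INR (jt N)).
Proof. intros Hd. unfold sig. rewrite Lam_cluster by auto. apply exp_plus. Qed.

Lemma w_cluster N d : (d < len N)%nat -> w (4 ^ N + d) = sig (4 ^ N) * cc (jt N) d.
Proof.
  intros Hd. unfold w, cc. rewrite <- Nat.add_succ_r. rewrite !sig_cluster by lia. ring.
Qed.

Lemma Rmax_scale a b : 0 < a -> Rmax 0 (a * b) = a * Rmax 0 b.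
Proof. intros Ha. unfold Rmax. destruct Rle_dec; destruct Rle_dec; nra. Qed.

Lemma sw_cluster N d z : (d <= len N)%nat ->
  sw (4 ^ N + d) z = sw (4 ^ N) z + sig (4 ^ N) * 2 ^ (4 ^ N) * ps (jt N) d (z / 2 ^ (4 ^ N)).
Proof.
  intros Hd. pose proof (pow2_pos (4 ^ N)). induction d.
  - rewrite Nat.add_0_r. simpl. ring.
  - rewrite Nat.add_succ_r. simpl sw. simpl ps. rewrite IHd by lia. rewrite w_cluster by lia.
    replace (z - 2 ^ (4 ^ N + d)) with (2 ^ (4 ^ N) * (z / 2 ^ (4 ^ N) - 2 ^ d)) by (rewrite pow_add; field; lra).
    rewrite Rmax_scale by auto. ring.
Qed.

Lemma w_gap N i : (1 <= N)%nat -> (2 * 4 ^ (N - 1) <= i < 4 ^ N)%nat -> w i = 0.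
Proof.
  intros HN Hi. apply w_zero. destruct (Req_dec (binv i) 0) as [Z|Z]; auto. exfalso.
  assert (Hi1 : (1 <= i)%nat) by (pose proof (Nat.pow_nonzero 4 (N - 1) ltac:(lia)); lia).
  destruct (binv_nz i Z Hi1) as [[A B] _]. pose proof (len_le (l4 i)) as HL.
  assert (l4 i < N)%nat.
  { destruct (Nat.lt_ge_cases (l4 i) N) as [H1|H1]; auto.
    assert (4 ^ N <= 4 ^ l4 i)%nat by (apply pow4_mono; auto). lia. }
  assert (4 ^ l4 i <= 4 ^ (N - 1))%nat by (apply pow4_mono; lia). lia.
Qed.

Lemma Phi_cluster N u : (1 <= N)%nat -> 0 <= u <= 2 ^ (len N) ->
  let D := sig (4 ^ N) * 2 ^ (4 ^ N) in
  D * Psi (jt N) u - 2 ^ (2 * 4 ^ (N - 1)) * sig (4 ^ N) <= Phi (2 ^ (4 ^ N) * u) <= D * Psi (jt N) u.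
Proof.
  intros HN Hu D. pose proof (pow2_pos (4 ^ N)) as HB. set (z := 2 ^ (4 ^ N) * u).
  assert (Hz : z <= 2 ^ (4 ^ N + len N)) by (unfold z; rewrite pow_add; apply Rmult_le_compat_l; lra).
  rewrite (Phi_eq _ _ Hz). unfold PhiK. rewrite sw_cluster by lia.
  replace (z / 2 ^ (4 ^ N)) with u by (unfold z; field; lra).
  assert (Hz0 : 0 <= z) by (unfold z; nra).
  pose proof (sw_upper (4 ^ N) z Hz0). pose proof (sw_lower (4 ^ N) z).
  assert (HI : Iw (4 ^ N) <= 2 ^ (2 * 4 ^ (N - 1)) * (sig (4 ^ N) - 1)).
  { apply Iw_bound. intros i Hi. apply (w_gap N i HN). lia. }
  pose proof (pow2_pos (2 * 4 ^ (N - 1))). pose proof (sig_pos (4 ^ N)).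
  unfold D, Psi. unfold len in *. unfold z in *. split; nra.
Qed.


Lemma ratio_bound a b Px P1 D I : 0 < D -> 0 <= I <= D / 2 -> 1 <= P1 -> 0 <= Px <= P1 ->
  D * Px - I <= a <= D * Px -> D * P1 - I <= b <= D * P1 -> 0 <= a ->
  Rabs (Px / P1 - a / b) <= 2 * I / D.
Proof.
  intros HD HI HP1 HPx Ha Hb Ha0.
  assert (Hb2 : D * P1 / 2 <= b) by nra.
  assert (Hbp : 0 < b) by nra.
  set (num := Px * b - a * P1).
  assert (Hq : Px / P1 - a / b = num / (P1 * b)) by (unfold num; field; lra).
  assert (Hn : Rabs num <= I * P1).
  { unfold num. unfold Rabs. destruct Rcase_abs; nra. }
  assert (Hden : D * P1 / 2 <= P1 * b) by nra.
  rewrite Hq. unfold Rdiv. rewrite Rabs_mult, Rabs_inv, (Rabs_right (P1 * b)) by nra.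
  apply Rle_trans with (I * P1 * / (P1 * b)).
  - apply Rmult_le_compat_r; [left; apply Rinv_0_lt_compat; nra|auto].
  - apply Rle_trans with (I * P1 * / (D * P1 / 2)).
    + apply Rmult_le_compat_l; [nra|]. apply Rinv_le_contravar; nra.
    + right. field. lra.
Qed.

Lemma Psi_mono j u v : (1 <= j)%nat -> u <= v -> Psi j u <= Psi j v.
Proof. intros Hj H. unfold Psi. pose proof (ps_mono j (j * j) u v Hj H). lra. Qed.

Lemma Psi_ge j u : (1 <= j)%nat -> u <= Psi j u.
Proof. intros Hj. unfold Psi. pose proof (ps_ge0 j (j * j) u Hj). lra. Qed.

Lemma approx N x : (1 <= N)%nat -> 0 <= x <= 1 ->
  Rabs (gj (jt N) x - Phi (x * 2 ^ (4 ^ N + len N)) / Phi (2 ^ (4 ^ N + len N)))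
    <= 2 * 2 ^ (2 * 4 ^ (N - 1)) / 2 ^ (4 ^ N).
Proof.
  intros HN Hx. set (j := jt N). assert (Hj : (1 <= j)%nat) by apply jt_ge1.
  set (L := len N). set (B := (4 ^ N)%nat). set (E := (2 * 4 ^ (N - 1))%nat).
  pose proof (pow2_pos L). pose proof (pow2_pos B). pose proof (pow2_pos E).
  assert (HL1 : 1 <= 2 ^ L) by (apply pow_R1_Rle; lra).
  assert (Hux : 0 <= 2 ^ L * x <= 2 ^ L) by (split; nra).
  destruct (Phi_cluster N (2 ^ L * x) HN Hux) as [A1 A2].
  destruct (Phi_cluster N (2 ^ L) HN ltac:(split; [lra|right; reflexivity])) as [B1 B2].
  fold B j in A1, A2, B1, B2. fold E in A1, B1.
  replace (x * 2 ^ (B + L)) with (2 ^ B * (2 ^ L * x)) by (rewrite pow_add; ring).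
  replace (2 ^ (B + L)) with (2 ^ B * 2 ^ L) by (rewrite pow_add; ring).
  unfold gj. fold j. replace (j * j)%nat with L by reflexivity.
  pose proof (sig_pos B).
  replace (2 * 2 ^ E / 2 ^ B) with (2 * (2 ^ E * sig B) / (sig B * 2 ^ B)) by (field; lra).
  apply ratio_bound.
  - apply Rmult_lt_0_compat; lra.
  - split; [nra|]. assert (2 * 2 ^ E <= 2 ^ B).
    { change (2 * 2 ^ E) with (2 ^ S E). apply pow2_mono. unfold E, B.
      destruct N as [|N']; [lia|]. rewrite pow4_S. replace (S N' - 1)%nat with N' by lia. pose proof (Nat.pow_nonzero 4 N' ltac:(lia)). lia. }
    nra.
  - pose proof (Psi_ge j (2 ^ L) Hj). lra.
  - split; [pose proof (Psi_ge j (2 ^ L * x) Hj); lra|]. apply Psi_mono; auto; lra.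
  - lra.
  - lra.
  - apply Phi_nonneg. nra.
Qed.


Lemma P1_ge j : (1 <= j)%nat -> 2 ^ (j * j) * (1 + INR j / 2) <= Psi j (2 ^ (j * j)).
Proof.
  intros Hj. unfold Psi. pose proof (ps_big j (j * j) (j * j) Hj (le_n _)).
  assert (INR (j * j) / INR j = INR j) by (rewrite mult_INR; field; apply not_0_INR; lia).
  rewrite H0 in H. pose proof (exp_ineq1_le (INR j)). pose proof (pow2_pos (j * j)). nra.
Qed.

Lemma gj_cont j : (1 <= j)%nat -> cont01 (gj j).
Proof.
  intros Hj x Hx eps He.
  set (L := (j * j)%nat). set (P1 := Psi j (2 ^ L)).
  assert (HP1 : 0 < P1) by (pose proof (Psi_ge j (2 ^ L) Hj); pose proof (pow2_pos L); unfold P1; lra).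
  set (K := exp (INR L / INR j) * 2 ^ L / P1).
  assert (HK : 0 < K) by (unfold K; pose proof (exp_pos (INR L / INR j)); pose proof (pow2_pos L);
    unfold Rdiv; apply Rmult_lt_0_compat; [nra|apply Rinv_0_lt_compat; auto]).
  exists (eps / K). split; [unfold Rdiv; apply Rmult_lt_0_compat; [auto|apply Rinv_0_lt_compat; auto]|].
  intros z Hz Hzx.
  assert (Hb : Rabs (gj j z - gj j x) <= K * Rabs (z - x)).
  { unfold gj. fold L. fold P1.
    replace (Psi j (2 ^ L * z) / P1 - Psi j (2 ^ L * x) / P1) with ((Psi j (2 ^ L * z) - Psi j (2 ^ L * x)) * / P1) by (field; lra).
    rewrite Rabs_mult, (Rabs_right (/ P1)) by (left; apply Rinv_0_lt_compat; auto).
    unfold Psi. fold L.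
    replace (2 ^ L * z + ps j L (2 ^ L * z) - (2 ^ L * x + ps j L (2 ^ L * x)))
      with ((2 ^ L * z - 2 ^ L * x) + (ps j L (2 ^ L * z) - ps j L (2 ^ L * x))) by ring.
    pose proof (ps_lip j L (2 ^ L * z) (2 ^ L * x) Hj).
    replace (2 ^ L * z - 2 ^ L * x) with (2 ^ L * (z - x)) in * by ring.
    rewrite Rabs_mult, (Rabs_right (2 ^ L)) in H by (left; apply pow2_pos).
    pose proof (Rabs_triang (2 ^ L * (z - x)) (ps j L (2 ^ L * z) - ps j L (2 ^ L * x))).
    rewrite Rabs_mult, (Rabs_right (2 ^ L)) in H0 by (left; apply pow2_pos).
    unfold K. pose proof (pow2_pos L). pose proof (Rabs_pos (z - x)).
    assert (0 < / P1) by (apply Rinv_0_lt_compat; auto).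
    apply Rle_trans with ((2 ^ L * Rabs (z - x) + (exp (INR L / INR j) - 1) * (2 ^ L * Rabs (z - x))) * / P1).
    - apply Rmult_le_compat_r; lra.
    - right. field. lra. }
  apply Rle_lt_trans with (K * Rabs (z - x)); auto.
  replace eps with (K * (eps / K)) by (field; lra). apply Rmult_lt_compat_l; auto.
Qed.

Lemma gj_bad j C : (1 <= j)%nat -> 0 < C -> 2 * C < INR j ->
  gj j (/ 2 ^ (j * j)) < / C * / 2 ^ (j * j).
Proof.
  intros Hj HC HjC. unfold gj. set (L := (j * j)%nat).
  pose proof (pow2_pos L). rewrite Rinv_r by lra. unfold Psi at 1. rewrite ps_at1. fold L.
  pose proof (P1_ge j Hj). fold L in H0.
  set (P1 := Psi j (2 ^ L)) in *.
  assert (C * 2 ^ L < P1) by nra.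
  replace (/ C * / 2 ^ L) with (/ (C * 2 ^ L)) by (field; lra).
  replace ((1 + 0) / P1) with (/ P1) by (field; nra).
  assert (0 < C * 2 ^ L) by (apply Rmult_lt_0_compat; lra).
  apply Rinv_lt_contravar; [apply Rmult_lt_0_compat; lra|auto].
Qed.

Lemma gj_EF T : E_F Phi (gj (T + 2)).
Proof.
  intros A HA. split; [apply gj_cont; lia|].
  intros eps He.
  set (M0 := Z.to_nat (up (A + 4 / eps))).
  assert (HM0 : A + 4 / eps < INR M0).
  { destruct (archimed (A + 4 / eps)) as [H1 _].
    assert (0 < 4 / eps) by (unfold Rdiv; apply Rmult_lt_0_compat; [lra|apply Rinv_0_lt_compat; auto]).
    assert (0 <= up (A + 4 / eps))%Z by (apply le_IZR; lra).
    unfold M0. rewrite INR_IZR_INZ, Z2Nat.id by auto. lra. }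
  set (M := (M0 + T + 2)%nat). set (N := (M * M + T)%nat).
  assert (HjN : jt N = (T + 2)%nat) by (apply jt_rec; unfold M; lia).
  assert (HN1 : (1 <= N)%nat) by (unfold N, M; nia).
  assert (HMN : (M <= N)%nat) by (unfold N, M; nia).
  set (y := 2 ^ (4 ^ N + len N)).
  exists (fun x => Phi (x * y) / Phi y). split.
  - exists y. split; [|intros; reflexivity].
    unfold y. pose proof (pow2_gt (4 ^ N + len N)).
    pose proof (pow4_ge N).
    assert (INR M0 <= INR (4 ^ N + len N)) by (apply le_INR; unfold M in HMN; lia).
    pose proof (pos_INR M0).
    assert (0 < 4 / eps) by (unfold Rdiv; apply Rmult_lt_0_compat; [lra|apply Rinv_0_lt_compat; auto]).
    lra.
  - intros x Hx. pose proof (approx N x HN1 Hx) as Ha. rewrite HjN in Ha. fold y in Ha.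
    eapply Rle_trans; [exact Ha|].
    set (B := (4 ^ N)%nat) in *. set (E := (2 * 4 ^ (N - 1))%nat) in *.
    assert (HBE : (B = E + 2 * 4 ^ (N - 1))%nat).
    { unfold B, E. destruct N as [|N']; [lia|]. rewrite pow4_S. replace (S N' - 1)%nat with N' by lia. lia. }
    assert (HNE : (N <= 2 * 4 ^ (N - 1))%nat).
    { destruct N as [|N']; [lia|]. replace (S N' - 1)%nat with N' by lia. pose proof (pow4_ge N'). lia. }
    set (G := (2 * 4 ^ (N - 1))%nat) in *.
    rewrite HBE, pow_add.
    pose proof (pow2_pos E). pose proof (pow2_pos G).
    replace (2 * 2 ^ E / (2 ^ E * 2 ^ G)) with (2 / 2 ^ G) by (field; lra).
    pose proof (pow2_gt G).
    assert (INR M0 <= INR G) by (apply le_INR; unfold M in HMN; lia).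
    assert (4 / eps < 2 ^ G) by lra.
    assert (4 / eps * eps = 4) by (field; lra).
    apply (Rmult_le_reg_r (2 ^ G)); auto. replace (2 / 2 ^ G * 2 ^ G) with 2 by (field; lra).
    nra.
Qed.

Theorem main_proof :
  exists Phi : R -> R, Orlicz Phi /\
    equiv_each (C_F Phi) (fun t => t) /\
    ~ equiv_unif (E_F Phi) (fun t => t).
Proof.
  exists Phi. split; [apply Phi_Orlicz|]. split; [apply CF_equiv; [apply Phi_Orlicz|apply Phi_dicho]|].
  intros [C [HC HH]].
  set (T := Z.to_nat (up (2 * C))).
  assert (HT : 2 * C < INR T).
  { destruct (archimed (2 * C)) as [H1 _]. assert (0 <= up (2 * C))%Z by (apply le_IZR; lra).
    unfold T. rewrite INR_IZR_INZ, Z2Nat.id by auto. lra. }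
  set (j := (T + 2)%nat).
  assert (Hj : 2 * C < INR j) by (unfold j; rewrite plus_INR; simpl; lra).
  pose proof (gj_bad j C ltac:(unfold j; lia) HC Hj) as Hb.
  pose proof (pow2_pos (j * j)).
  assert (Ht : 0 < / 2 ^ (j * j) <= 1).
  { split; [apply Rinv_0_lt_compat; auto|]. replace 1 with (/ 1) by apply Rinv_1.
    apply Rinv_le_contravar; [lra|apply pow_R1_Rle; lra]. }
  destruct (HH (gj j) (gj_EF T) _ Ht) as [H1 _]. lra.
Qed.


Theorem mainTheorem1 :
  exists Phi : R -> R, Orlicz Phi /\
    equiv_each (C_F Phi) (fun t => t) /\
    ~ equiv_unif (E_F Phi) (fun t => t).
Proof. exact main_proof. Qed.
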